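(* Let $h:\mathcal{S}^{2}\to\mathbb{R}$ be a function and consider the optimization problem \[ \inf_{\nu\in\mathcal{P}(\mathcal{S}^{2})}\left\{ J(\nu)+\sum_{\mathbf{x}\in\mathcal{S}^{2}}h(\mathbf{x})\nu(\mathbf{x})\right\}, \] together with the static (ergodic) Bellman equation, for all $\mathbf{x}\in\mathcal{S}^{2}$, \[ 0=\inf_{u\in U}\left\{ \sum_{\mathbf{y}\in\mathcal{S}^{2}}\left( u(\mathbf{y})\left[ W(\mathbf{y})-W(\mathbf{x})\right] +r(\mathbf{x},\mathbf{y})\ell\left( \frac{u(\mathbf{y})}{r(\mathbf{x},\mathbf{y})}\right) \right) -\gamma+h(\mathbf{x})\right\}, \] in the unknowns $\gamma\in\mathbb{R}$ and $W:\mathcal{S}^{2}\to\mathbb{R}$. Consider any solution $(\gamma,W)$ of the Bellman equation, with $W$ normalized so that $\bar{\nu}(\mathbf{x})=\bar{\mu}(\mathbf{x})e^{-2W(\mathbf{x})}$ is a probability measure on $\mathcal{S}^{2}$. Then $\bar{\nu}$ is a minimizer of the optimization problem. Conversely, if $\nu^{\ast}$ is a minimizing measure of the optimization problem, then a solution $(\gamma^{\ast},W^{\ast})$ of the Bellman equation is given by \[ W^{\ast}(\mathbf{x})=-\log\left[ \frac{d\nu^{\ast}}{d\bar{\mu}}\right]^{1/2}(\mathbf{x}),\qquad \gamma^{\ast}=J(\nu^{\ast})+\sum_{\mathbf{x}\in\mathcal{S}^{2}}h(\mathbf{x})\nu^{\ast}(\mathbf{x}), \] and by uniqueness $(\ga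mma^{\ast},W^{\ast})=(\gamma,W)$.
   Context: Setting: $\mathcal{S}$ is a finite state space; two temperatures with ergodic rate matrices $\Gamma^{1},\Gamma^{2}$ on $\mathcal{S}$, reversible with respect to their unique invariant measures $\mu_{1},\mu_{2}$ (all states communicate), $\mu=\mu_{1}\times\mu_{2}$. With $\rho(x_{1},x_{2})=\mu(x_{1},x_{2})/[\mu(x_{1},x_{2})+\mu(x_{2},x_{1})]$, the infinite swapping process on $\mathcal{S}^{2}$ has rates $r(\mathbf{x},\mathbf{y})=\Gamma^{\infty}_{\mathbf{x},\mathbf{y}}$, where $\Gamma^{\infty}_{(x_{1},x_{2}),(y_{1},x_{2})}=\rho(x_{1},x_{2})\Gamma^{1}_{x_{1},y_{1}}+\rho(x_{2},x_{1})\Gamma^{2}_{x_{1},y_{1}}$ for $y_{1}\neq x_{1}$, $\Gamma^{\infty}_{(x_{1},x_{2}),(x_{1},y_{2})}=\rho(x_{1},x_{2})\Gamma^{2}_{x_{2},y_{2}}+\rho(x_{2},x_{1})\Gamma^{1}_{x_{2},y_{2}}$ for $y_{2}\neq x_{2}$, and $0$ for other off-diagonal pairs; $q^{\infty}(\mathbf{x})=\sum_{\mathbf{y}\neq\mathbf{x}}\Gamma^{\infty}_{\mathbf{x},\mathbf{y}}$. Its invariant measure is the symmetrized $\bar{\mu}(y_{1},y_{2})=\frac12[\mu(y_{1},y_{2})+\mu(y_{2},y_{1})]$. $J$ is the (strictly convex) large deviation rate function of the empirical measure of the infinite swapping process: $J(\nu)=\sum_{\mathbf{x}}q^{\infty}(\mathbf{x})\theta(\mathbf{x})\bar{\mu}(\mathbf{x})-\sum_{\mathbf{x},\mathbf{y}}\theta^{1/2}(\mathbf{x})\theta^{1/2}(\mathbf{y})\Gamma^{\infty}_{\mathbf{x},\mathbf{y}}\bar{\mu}(\mathbf{x})$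 with $\theta=\nu/\bar{\mu}$. The control space is $U=[0,\infty)^{|\mathcal{S}|^{2}}$ (vectors of jump rates $u(\mathbf{y})$), and $\ell(x)=x\log x-x+1$ for $x\geq0$, $\ell(x)=\infty$ otherwise. Solutions $(\gamma,W)$ of the Bellman equation have $\gamma$ unique and $W$ unique up to an additive constant. *)

(* Defs.v *)
From HB Require Import structures.
From mathcomp Require Import all_boot all_order all_algebra.
From mathcomp Require Import all_classical all_reals all_analysis.
Set Implicit Arguments. Unset Strict Implicit. Unset Printing Implicit Defensive.
Import Order.TTheory GRing.Theory Num.Theory.
Local Open Scope ring_scope.
Local Open Scope classical_set_scope.

Section Defs.
Variables (R : realType) (S : finType).

Definition rate_matrix (G : S -> S -> R) : Prop :=
  (forall x y, x != y -> 0 <= G x y) /\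
  (forall x, G x x = - \sum_(y | y != x) G x y).

Definition irreducible (G : S -> S -> R) : Prop :=
  forall x y, connect [rel a b | (a != b) && (0 < G a b)] x y.

Definition prob_vec (T : finType) (m : T -> R) : Prop :=
  (forall x, 0 <= m x) /\ \sum_x m x = 1.

Definition reversible (G : S -> S -> R) (m : S -> R) : Prop :=
  forall x y, m x * G x y = m y * G y x.

Variables (G1 G2 : S -> S -> R) (mu1 mu2 : S -> R).

Definition mu (a b : S) : R := mu1 a * mu2 b.

Definition rho (a b : S) : R := mu a b / (mu a b + mu b a).

(** symmetrized invariant measure of the infinite swapping process *)
Definition mubar (y : S * S) : R := (mu y.1 y.2 + mu y.2 y.1) / 2.

(** off-diagonal rates r(x,y) = Gamma^infty_{x,y}; r(x,x) := 0 *)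
Definition rinf (x y : S * S) : R :=
  if (x.2 == y.2) && (x.1 != y.1) then
    rho x.1 x.2 * G1 x.1 y.1 + rho x.2 x.1 * G2 x.1 y.1
  else if (x.1 == y.1) && (x.2 != y.2) then
    rho x.1 x.2 * G2 x.2 y.2 + rho x.2 x.1 * G1 x.2 y.2
  else 0.

Definition qinf (x : S * S) : R := \sum_(y | y != x) rinf x y.

(** Large deviation rate function of the empirical measure *)
Definition Jrate (nu : S * S -> R) : R :=
  let theta := fun x => nu x / mubar x in
  \sum_x qinf x * theta x * mubar x
  - \sum_x \sum_(y | y != x) Num.sqrt (theta x) * Num.sqrt (theta y) * rinf x y * mubar x.

Definition objective (h : S * S -> R) (nu : S * S -> R) : R :=
  Jrate nu + \sum_x h x * nu x.

Definition minimizer (h : S * S -> R) (nu : S * S -> R) : Prop :=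
  prob_vec nu /\ forall nu', prob_vec nu' -> objective h nu <= objective h nu'.

End Defs.

(** ell(x) = x log x - x + 1 for x >= 0 (0 log 0 = 0); only used at x >= 0. *)
Definition ell {R : realType} (x : R) : R :=
  if x == 0 then 1 else x * ln x - x + 1.

(** the term r * ell(u / r), with the usual conventions when r = 0:
    0 * ell(0/0) = 0 and 0 * ell(u/0) = +oo for u > 0. *)
Definition rell {R : realType} (r u : R) : \bar R :=
  if 0 < r then (r * ell (u / r))%:E
  else if u == 0 then 0%E else +oo%E.

Section Bellman.
Variables (R : realType) (S : finType).
Variables (G1 G2 : S -> S -> R) (mu1 mu2 : S -> R).

Definition Uctrl : set (S * S -> R) := [set u | forall y, 0 <= u y].

Definition bellman (h : S * S -> R) (gamma : R) (W : S * S -> R) : Prop :=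
  forall x : S * S,
    0%E = ereal_inf [set ((\sum_(y : S * S)
              ((u y * (W y - W x))%:E + rell (rinf G1 G2 mu1 mu2 x y) (u y)))
              + (h x - gamma)%:E)%E | u in Uctrl].

End Bellman.

(* Main.v *)
Require Import Defs.
From HB Require Import structures.
From mathcomp Require Import all_boot all_order all_algebra.
From mathcomp Require Import all_classical all_reals all_analysis.
From mathcomp Require Import ring lra.
Import Order.TTheory GRing.Theory Num.Theory.
Set Implicit Arguments. Unset Strict Implicit. Unset Printing Implicit Defensive.
Local Open Scope ring_scope.

Definition Qf (R : realType) (T : finType) (M : T -> T -> R) (a b : T -> R) : R :=
  \sum_x \sum_y M x y * a x * b y.

Lemma Qf_expand (R : realType) (T : finType) (M : T -> T -> R) (a v : T -> R) (t : R) :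
  Qf M (fun x => a x + t * v x) (fun x => a x + t * v x) =
  Qf M a a + t * (Qf M a v + Qf M v a) + t ^+ 2 * Qf M v v.
Proof.
rewrite /Qf -big_split /= mulr_sumr -!big_split /= mulr_sumr -big_split /=.
apply: eq_bigr => x _; rewrite -big_split /= mulr_sumr -!big_split /= mulr_sumr -big_split /=.
by apply: eq_bigr => y _; ring.
Qed.

Lemma Qf_ext (R : realType) (T : finType) (M : T -> T -> R) (a b : T -> R) :
  (forall x, a x = b x) -> Qf M a a = Qf M b b.
Proof. by move=> e; rewrite /Qf; apply: eq_bigr => x _; apply: eq_bigr => y _; rewrite !e. Qed.

Lemma Qf_sym (R : realType) (T : finType) (M : T -> T -> R) (a b : T -> R) :
  (forall x y, M x y = M y x) -> Qf M a b = Qf M b a.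
Proof.
move=> Ms; rewrite /Qf exchange_big /=.
by apply: eq_bigr => x _; apply: eq_bigr => y _; rewrite Ms; ring.
Qed.

Lemma Qf_row (R : realType) (T : finType) (M : T -> T -> R) (a b : T -> R) :
  Qf M a b = \sum_x a x * (\sum_y M x y * b y).
Proof.
rewrite /Qf; apply: eq_bigr => x _; rewrite mulr_sumr.
by apply: eq_bigr => y _; ring.
Qed.

Lemma Qf_abs (R : realType) (T : finType) (M : T -> T -> R) (a : T -> R) :
  (forall x y, x != y -> M x y <= 0) ->
  Qf M (fun x => `|a x|) (fun x => `|a x|) <= Qf M a a.
Proof.
move=> Mn; rewrite /Qf; apply: ler_sum => x _; apply: ler_sum => y _.
case: (eqVneq x y) => [<-|xy].
  by rewrite -mulrA -normrM ger0_norm ?mulrA // -expr2 sqr_ge0.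
have := Mn _ _ xy; have := ler_norm (a x * a y); rewrite normrM => h1 h2.
rewrite -!mulrA; nra.
Qed.

Lemma Qf_scale (R : realType) (T : finType) (M : T -> T -> R) (a : T -> R) (k : R) :
  Qf M (fun x => k * a x) (fun x => k * a x) = k ^+ 2 * Qf M a a.
Proof.
rewrite /Qf mulr_sumr; apply: eq_bigr => x _; rewrite mulr_sumr.
by apply: eq_bigr => y _; ring.
Qed.

Lemma Qf_ground (R : realType) (T : finType) (M : T -> T -> R) (phi a : T -> R) :
  (forall x y, M x y = M y x) -> (forall x, phi x != 0) ->
  (forall x, \sum_y M x y * phi y = 0) ->
  2 * Qf M a a = \sum_x \sum_y (- M x y) * phi x * phi y * (a x / phi x - a y / phi y) ^+ 2.
Proof.
move=> Ms phi0 Hr.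
set t := fun x => a x / phi x.
have at_ : forall x, a x = t x * phi x by move=> x; rewrite /t divfK.
have A0 : \sum_x \sum_y M x y * phi x * phi y * t x ^+ 2 = 0.
  apply: big1 => x _.
  transitivity (t x ^+ 2 * phi x * \sum_y M x y * phi y).
    by rewrite mulr_sumr; apply: eq_bigr => y _; ring.
  by rewrite Hr mulr0.
have B0 : \sum_x \sum_y M x y * phi x * phi y * t y ^+ 2 = 0.
  rewrite exchange_big /= -[RHS]A0; apply: eq_bigr => x _; apply: eq_bigr => y _.
  by rewrite Ms; ring.
rewrite [RHS](_ : _ = \sum_x \sum_y (- (M x y * phi x * phi y * t x ^+ 2)
    - (M x y * phi x * phi y * t y ^+ 2) + 2 * (M x y * a x * a y))); last first.
  apply: eq_bigr => x _; apply: eq_bigr => y _; rewrite (at_ x) (at_ y) /t.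
  rewrite -/(t x) -/(t y); field; apply/andP; split; exact: phi0.
under eq_bigr => x _ do rewrite !big_split /= !sumrN -mulr_sumr.
rewrite !big_split /= !sumrN -mulr_sumr A0 B0 /Qf; ring.
Qed.

Lemma Qf_ground_ge0 (R : realType) (T : finType) (M : T -> T -> R) (phi a : T -> R) :
  (forall x y, M x y = M y x) -> (forall x, 0 < phi x) ->
  (forall x y, x != y -> M x y <= 0) ->
  (forall x, \sum_y M x y * phi y = 0) -> 0 <= Qf M a a.
Proof.
move=> Ms phi0 Mn Hr.
have phin : forall x, phi x != 0 by move=> x; rewrite gt_eqF.
have := Qf_ground a Ms phin Hr.
have : 0 <= \sum_x \sum_y (- M x y) * phi x * phi y * (a x / phi x - a y / phi y) ^+ 2.
  apply: sumr_ge0 => x _; apply: sumr_ge0 => y _.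
  case: (eqVneq x y) => [<-|xy]; first by rewrite subrr expr0n /= mulr0.
  have := Mn _ _ xy; have := phi0 x; have := phi0 y.
  have := sqr_ge0 (a x / phi x - a y / phi y) => *.
  apply: mulr_ge0 => //; apply: mulr_ge0; last exact: ltW.
  apply: mulr_ge0; [by rewrite oppr_ge0 | exact: ltW].
move=> h1 h2; rewrite -h2 in h1; lra.
Qed.

Lemma Qf_ground_eq0 (R : realType) (T : finType) (M : T -> T -> R) (phi a : T -> R) :
  (forall x y, M x y = M y x) -> (forall x, 0 < phi x) ->
  (forall x y, x != y -> M x y <= 0) ->
  (forall x, \sum_y M x y * phi y = 0) -> Qf M a a = 0 ->
  forall x y, M x y < 0 -> a x / phi x = a y / phi y.
Proof.
move=> Ms phi0 Mn Hr Q0 x y Mxy.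
have phin : forall x, phi x != 0 by move=> z; rewrite gt_eqF.
have := Qf_ground a Ms phin Hr; rewrite Q0 mulr0 => /esym.
have tge0 : forall x y, 0 <= (- M x y) * phi x * phi y * (a x / phi x - a y / phi y) ^+ 2.
  move=> z w; case: (eqVneq z w) => [<-|zw]; first by rewrite subrr expr0n /= mulr0.
  have := Mn _ _ zw; have := phi0 z; have := phi0 w.
  have := sqr_ge0 (a z / phi z - a w / phi w) => *.
  apply: mulr_ge0 => //; apply: mulr_ge0; last exact: ltW.
  apply: mulr_ge0; [by rewrite oppr_ge0 | exact: ltW].
move/psumr_eq0P => H.
have H2 := H (fun z _ => sumr_ge0 _ (fun w _ => tge0 z w)) x isT.
have := @psumr_eq0P _ _ _ _ (fun y _ => tge0 x y) H2 y isT.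
move=> E.
have pos : 0 < - M x y * phi x * phi y by rewrite !mulr_gt0 // oppr_gt0.
move: E => /eqP; rewrite mulf_eq0 (gt_eqF pos) /= sqrf_eq0 subr_eq0 => /eqP //.
Qed.

Lemma quad_zero (R : realType) (L K : R) :
  (forall t, 0 <= t * L + t ^+ 2 * K) -> L = 0.
Proof.
move=> H; have := H (- L / (`|K| + 1)).
have hK : 0 < `|K| + 1 by rewrite ltr_wpDl.
set d := `|K| + 1.
have -> : - L / d * L + (- L / d) ^+ 2 * K = L ^+ 2 / d ^+ 2 * (K - d).
  by field; rewrite gt_eqF.
have : K - d < 0 by rewrite /d; have := ler_norm K; lra.
move=> hn h.
have e0 : 0 <= L ^+ 2 / d ^+ 2 by rewrite divr_ge0 // sqr_ge0.
have : L ^+ 2 / d ^+ 2 = 0 by nra.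
move/eqP; rewrite mulf_eq0 invr_eq0 !expf_eq0 /= (gt_eqF hK) orbF => /eqP //.
Qed.

Lemma mu_gt0 (R : realType) (S : finType) (mu1 mu2 : S -> R) :
  (forall x, 0 < mu1 x) -> (forall x, 0 < mu2 x) -> forall a b, 0 < mu mu1 mu2 a b.
Proof. by move=> h1 h2 a b; rewrite /mu mulr_gt0. Qed.

Lemma mb_gt0 (R : realType) (S : finType) (mu1 mu2 : S -> R) :
  (forall x, 0 < mu1 x) -> (forall x, 0 < mu2 x) -> forall x, 0 < mubar mu1 mu2 x.
Proof.
move=> h1 h2 x; rewrite /mubar divr_gt0 // addr_gt0 //; exact: mu_gt0.
Qed.

Lemma rho_gt0 (R : realType) (S : finType) (mu1 mu2 : S -> R) :
  (forall x, 0 < mu1 x) -> (forall x, 0 < mu2 x) -> forall a b, 0 < rho mu1 mu2 a b.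
Proof.
move=> h1 h2 a b; rewrite /rho divr_gt0 // ?addr_gt0 //; exact: mu_gt0.
Qed.

Lemma mb_rho (R : realType) (S : finType) (mu1 mu2 : S -> R) :
  (forall x, 0 < mu1 x) -> (forall x, 0 < mu2 x) -> forall a b,
  mubar mu1 mu2 (a, b) * rho mu1 mu2 a b = mu mu1 mu2 a b / 2 /\
  mubar mu1 mu2 (a, b) * rho mu1 mu2 b a = mu mu1 mu2 b a / 2.
Proof.
move=> h1 h2 a b; have p1 := mu_gt0 h1 h2 a b; have p2 := mu_gt0 h1 h2 b a.
rewrite /mubar /rho /=; split; field; rewrite ?gt_eqF // ?addr_gt0 //.
Qed.

Lemma rinf_xx (R : realType) (S : finType) (G1 G2 : S -> S -> R) (mu1 mu2 : S -> R) x :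
  rinf G1 G2 mu1 mu2 x x = 0.
Proof. by rewrite /rinf !eqxx. Qed.

Lemma rinf_ge0 (R : realType) (S : finType) (G1 G2 : S -> S -> R) (mu1 mu2 : S -> R) :
  rate_matrix G1 -> rate_matrix G2 ->
  (forall x, 0 < mu1 x) -> (forall x, 0 < mu2 x) -> forall x y,
  0 <= rinf G1 G2 mu1 mu2 x y.
Proof.
move=> [g1 _] [g2 _] h1 h2 [a b] [c d]; rewrite /rinf /=.
have r1 := rho_gt0 h1 h2.
case: ifP => [/andP [_ ac]|_].
  by apply: addr_ge0; apply: mulr_ge0; try exact: ltW; [exact: g1 | exact: g2].
case: ifP => [/andP [_ bd]|_] //.
by apply: addr_ge0; apply: mulr_ge0; try exact: ltW; [exact: g2 | exact: g1].
Qed.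

Lemma rinf_sym (R : realType) (S : finType) (G1 G2 : S -> S -> R) (mu1 mu2 : S -> R) :
  (forall x, 0 < mu1 x) -> (forall x, 0 < mu2 x) ->
  reversible G1 mu1 -> reversible G2 mu2 -> forall x y,
  mubar mu1 mu2 x * rinf G1 G2 mu1 mu2 x y = mubar mu1 mu2 y * rinf G1 G2 mu1 mu2 y x.
Proof.
move=> h1 h2 rv1 rv2 [a b] [c d].
have E1 : forall u v, G1 v u = mu1 u * G1 u v / mu1 v.
  by move=> u v; rewrite rv1 mulrC mulrA mulVf ?mul1r // gt_eqF.
have E2 : forall u v, G2 v u = mu2 u * G2 u v / mu2 v.
  by move=> u v; rewrite rv2 mulrC mulrA mulVf ?mul1r // gt_eqF.
rewrite /rinf /= [d == b]eq_sym [c == a]eq_sym.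
have p1 := h1; have p2 := h2.
case: ifP => [/andP [/eqP <- ac]|_].
  rewrite (E1 a c) (E2 a c) /mubar /rho /mu /=.
  by field; rewrite !gt_eqF // ?addr_gt0 ?mulr_gt0.
case: ifP => [/andP [/eqP <- bd]|_]; last by rewrite !mulr0.
rewrite (E1 b d) (E2 b d) /mubar /rho /mu /=.
by field; rewrite !gt_eqF // ?addr_gt0 ?mulr_gt0.
Qed.

Lemma rinf_pos_sym (R : realType) (S : finType) (G1 G2 : S -> S -> R) (mu1 mu2 : S -> R) :
  (forall x, 0 < mu1 x) -> (forall x, 0 < mu2 x) ->
  reversible G1 mu1 -> reversible G2 mu2 -> forall x y,
  0 < rinf G1 G2 mu1 mu2 x y -> 0 < rinf G1 G2 mu1 mu2 y x.
Proof.
move=> h1 h2 rv1 rv2 x y hp.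
have := rinf_sym h1 h2 rv1 rv2 x y; have := mb_gt0 h1 h2 x; have := mb_gt0 h1 h2 y.
move=> py px e.
have : 0 < mubar mu1 mu2 y * rinf G1 G2 mu1 mu2 y x by rewrite -e mulr_gt0.
by rewrite pmulr_rgt0.
Qed.

Lemma closed_all (R : realType) (S : finType) (G1 G2 : S -> S -> R) (mu1 mu2 : S -> R) :
  rate_matrix G1 -> rate_matrix G2 -> irreducible G1 ->
  (forall x, 0 < mu1 x) -> (forall x, 0 < mu2 x) ->
  forall P : pred (S * S),
  (forall x y, 0 < rinf G1 G2 mu1 mu2 x y -> P x = P y) -> forall x y, P x = P y.
Proof.
move=> [g1 _] [g2 _] ir h1 h2 P HP [a b] [c d].
have r1 := rho_gt0 h1 h2.
transitivity (P (c, b)).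
  have cl : fingraph.closed [rel u v | (u != v) && (0 < G1 u v)] [pred z | P (z, b)].
    move=> u v /= /andP [uv guv]; apply: HP; rewrite /rinf /= eqxx uv /=.
    have := mulr_gt0 (r1 u b) guv; have := mulr_ge0 (ltW (r1 b u)) (g2 _ _ uv); lra.
  exact: (closed_connect cl (ir a c)).
have cl : fingraph.closed [rel u v | (u != v) && (0 < G1 u v)] [pred z | P (c, z)].
  move=> u v /= /andP [uv guv]; apply: HP; rewrite /rinf /= eqxx uv /=.
  rewrite (negbTE uv) /=.
  have := mulr_gt0 (r1 u c) guv; have := mulr_ge0 (ltW (r1 c u)) (g2 _ _ uv); lra.
exact: (closed_connect cl (ir b d)).
Qed.

Lemma ell_core (R : realType) (r u a : R) : 0 < r -> 0 <= u ->
  r * (1 - expR (- a)) <= u * a + r * ell (u / r).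
Proof.
move=> r0 u0; rewrite /ell.
have e0 := expR_gt0 (- a).
case: eqP => [v0|vn].
  have : u = 0 by move/eqP: v0; rewrite mulf_eq0 invr_eq0 (gt_eqF r0) orbF => /eqP.
  move=> ->; nra.
set v := u / r.
have vpos : 0 < v by rewrite /v lt0r; apply/andP; split; [apply/eqP | rewrite divr_ge0 // ltW].
have -> : u = v * r by rewrite /v divfK // gt_eqF.
set z := a + ln v.
have ea : expR (- a) = v * expR (- z).
  by rewrite -{1}(lnK vpos) -expRD /z; congr expR; ring.
have ln_v : ln v = z - a by rewrite /z; ring.
rewrite ea ln_v.
have := expR_ge1Dx (- z); have rv : 0 < r * v by rewrite mulr_gt0.
move=> hz; nra.
Qed.

Lemma ell_eq (R : realType) (r a : R) : 0 < r ->
  r * expR (- a) * a + r * ell (r * expR (- a) / r) = r * (1 - expR (- a)).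
Proof.
move=> r0; rewrite [r * expR (- a) / r]mulrAC divff ?gt_eqF // mul1r /ell gt_eqF ?expR_gt0 // expRK.
ring.
Qed.

Lemma term_ge (R : realType) (r u a : R) : 0 <= r -> 0 <= u ->
  ((r * (1 - expR (- a)))%:E <= (u * a)%:E + rell r u)%E.
Proof.
move=> r0 u0; rewrite /rell; case: ifP => rp.
  by rewrite -EFinD lee_fin ell_core.
have r00 : r = 0 by apply/eqP; rewrite eq_le r0 andbT leNgt rp.
case: eqP => [->|_]; first by rewrite r00 !mul0r adde0.
by rewrite addey ?leey.
Qed.

Lemma term_eq (R : realType) (r a : R) : 0 <= r ->
  ((r * expR (- a)) * a)%:E + rell r (r * expR (- a)) = (r * (1 - expR (- a)))%:E.
Proof.
move=> r0; rewrite /rell; case: ifP => rp.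
  by rewrite -EFinD ell_eq.
have r00 : r = 0 by apply/eqP; rewrite eq_le r0 andbT leNgt rp.
by rewrite r00 !mul0r eqxx adde0.
Qed.

Lemma bellman_iff (R : realType) (S : finType) (G1 G2 : S -> S -> R) (mu1 mu2 : S -> R)
  (h : S * S -> R) (gamma : R) (W : S * S -> R) :
  rate_matrix G1 -> rate_matrix G2 ->
  (forall x, 0 < mu1 x) -> (forall x, 0 < mu2 x) ->
  bellman G1 G2 mu1 mu2 h gamma W <->
  (forall x, \sum_y rinf G1 G2 mu1 mu2 x y * (1 - expR (- (W y - W x))) + (h x - gamma) = 0).
Proof.
move=> rm1 rm2 h1 h2.
have rge := rinf_ge0 rm1 rm2 h1 h2.
suff ie : forall x : S * S, ereal_inf [set ((\sum_(y : S * S)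
              ((u y * (W y - W x))%:E + rell (rinf G1 G2 mu1 mu2 x y) (u y)))
              + (h x - gamma)%:E)%E | u in @Uctrl R S] =
   (\sum_y rinf G1 G2 mu1 mu2 x y * (1 - expR (- (W y - W x))) + (h x - gamma))%:E.
  rewrite /bellman; split=> H x; have := H x; rewrite ie.
    by move=> /esym/eqP; rewrite eqe => /eqP.
  by move=> ->.
move=> x; apply/eqP; rewrite eq_le; apply/andP; split.
  apply: ge_ereal_inf.
  exists ((\sum_y rinf G1 G2 mu1 mu2 x y * (1 - expR (- (W y - W x))) + (h x - gamma))%:E);
    last exact: lexx.
  exists (fun y => rinf G1 G2 mu1 mu2 x y * expR (- (W y - W x))).
    by move=> y /=; rewrite mulr_ge0 ?rge // ltW // expR_gt0.
  under eq_bigr => y _ do rewrite term_eq ?rge //.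
  by rewrite sumEFin -EFinD.
apply: le_ereal_inf_tmp => z [u hu <-].
rewrite EFinD -sumEFin; apply: leeD2r; apply: lee_sum => y _.
exact: term_ge (rge _ _) (hu y).
Qed.

Definition Mg (R : realType) (S : finType) (G1 G2 : S -> S -> R) (mu1 mu2 : S -> R)
  (h : S * S -> R) (g : R) (x y : S * S) : R :=
  (if x == y then (qinf G1 G2 mu1 mu2 x + h x - g) * mubar mu1 mu2 x else 0)
  - rinf G1 G2 mu1 mu2 x y * mubar mu1 mu2 x.

Lemma qinf_full (R : realType) (S : finType) (G1 G2 : S -> S -> R) (mu1 mu2 : S -> R) x :
  qinf G1 G2 mu1 mu2 x = \sum_y rinf G1 G2 mu1 mu2 x y.
Proof. by rewrite /qinf [RHS](bigD1 x) //= rinf_xx add0r. Qed.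

Lemma Mg_row (R : realType) (S : finType) (G1 G2 : S -> S -> R) (mu1 mu2 : S -> R)
  (h : S * S -> R) (g : R) (b : S * S -> R) x :
  \sum_y Mg G1 G2 mu1 mu2 h g x y * b y =
  mubar mu1 mu2 x * ((qinf G1 G2 mu1 mu2 x + h x - g) * b x
     - \sum_y rinf G1 G2 mu1 mu2 x y * b y).
Proof.
rewrite /Mg; under eq_bigr => y _ do rewrite mulrBl.
rewrite sumrB (bigD1 x) //= eqxx big1 ?addr0; last first.
  by move=> y /negbTE; rewrite eq_sym => ->; rewrite mul0r.
rewrite mulrBr mulr_sumr; congr (_ - _); first ring.
by apply: eq_bigr => y _; ring.
Qed.

Lemma Mg_sym (R : realType) (S : finType) (G1 G2 : S -> S -> R) (mu1 mu2 : S -> R)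
  (h : S * S -> R) (g : R) :
  (forall x, 0 < mu1 x) -> (forall x, 0 < mu2 x) ->
  reversible G1 mu1 -> reversible G2 mu2 ->
  forall x y, Mg G1 G2 mu1 mu2 h g x y = Mg G1 G2 mu1 mu2 h g y x.
Proof.
move=> h1 h2 rv1 rv2 x y; rewrite /Mg.
case: (eqVneq x y) => [->//|xy]; congr (_ - _).
by rewrite mulrC rinf_sym // mulrC.
Qed.

Lemma Mg_off (R : realType) (S : finType) (G1 G2 : S -> S -> R) (mu1 mu2 : S -> R)
  (h : S * S -> R) (g : R) x y : x != y ->
  Mg G1 G2 mu1 mu2 h g x y = - (rinf G1 G2 mu1 mu2 x y * mubar mu1 mu2 x).
Proof. by move=> xy; rewrite /Mg (negbTE xy) sub0r. Qed.

Lemma Mg_off_le0 (R : realType) (S : finType) (G1 G2 : S -> S -> R) (mu1 mu2 : S -> R)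
  (h : S * S -> R) (g : R) :
  rate_matrix G1 -> rate_matrix G2 ->
  (forall x, 0 < mu1 x) -> (forall x, 0 < mu2 x) ->
  forall x y, x != y -> Mg G1 G2 mu1 mu2 h g x y <= 0.
Proof.
move=> rm1 rm2 h1 h2 x y xy; rewrite Mg_off // oppr_le0 mulr_ge0 ?rinf_ge0 //.
exact: ltW (mb_gt0 h1 h2 x).
Qed.

Lemma Qf_Mg (R : realType) (S : finType) (G1 G2 : S -> S -> R) (mu1 mu2 : S -> R)
  (h : S * S -> R) (g : R) (a : S * S -> R) :
  Qf (Mg G1 G2 mu1 mu2 h g) a a =
  \sum_x (qinf G1 G2 mu1 mu2 x + h x - g) * mubar mu1 mu2 x * (a x * a x)
  - \sum_x \sum_y a x * a y * rinf G1 G2 mu1 mu2 x y * mubar mu1 mu2 x.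
Proof.
rewrite Qf_row; under eq_bigr => x _ do rewrite Mg_row.
rewrite -sumrB; apply: eq_bigr => x _.
have -> : \sum_y a x * a y * rinf G1 G2 mu1 mu2 x y * mubar mu1 mu2 x =
   a x * mubar mu1 mu2 x * \sum_y rinf G1 G2 mu1 mu2 x y * a y.
  by rewrite mulr_sumr; apply: eq_bigr => y _; ring.
ring.
Qed.

Lemma Qf_Mg_shift (R : realType) (S : finType) (G1 G2 : S -> S -> R) (mu1 mu2 : S -> R)
  (h : S * S -> R) (g : R) (a : S * S -> R) :
  Qf (Mg G1 G2 mu1 mu2 h g) a a =
  Qf (Mg G1 G2 mu1 mu2 h 0) a a - g * \sum_x mubar mu1 mu2 x * (a x * a x).
Proof.
rewrite !Qf_Mg mulr_sumr.
have -> : \sum_x (qinf G1 G2 mu1 mu2 x + h x - g) * mubar mu1 mu2 x * (a x * a x) =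
  \sum_x (qinf G1 G2 mu1 mu2 x + h x - 0) * mubar mu1 mu2 x * (a x * a x)
  - \sum_x g * (mubar mu1 mu2 x * (a x * a x)).
  by rewrite -sumrB; apply: eq_bigr => x _; ring.
ring.
Qed.

Lemma row_bell (R : realType) (S : finType) (G1 G2 : S -> S -> R) (mu1 mu2 : S -> R)
  (h : S * S -> R) (g : R) (W : S * S -> R) x :
  \sum_y Mg G1 G2 mu1 mu2 h g x y * expR (- W y) =
  mubar mu1 mu2 x * expR (- W x) *
  (\sum_y rinf G1 G2 mu1 mu2 x y * (1 - expR (- (W y - W x))) + (h x - g)).
Proof.
rewrite Mg_row qinf_full.
have -> : \sum_y rinf G1 G2 mu1 mu2 x y * (1 - expR (- (W y - W x))) =
   \sum_y rinf G1 G2 mu1 mu2 x y - (expR (- W x))^-1 * \sum_y rinf G1 G2 mu1 mu2 x y * expR (- W y).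
  rewrite mulr_sumr -sumrB; apply: eq_bigr => y _.
  rewrite -expRN opprK opprB (addrC (W x)) expRD; ring.
have := expR_gt0 (- W x) => ep.
by field; rewrite gt_eqF.
Qed.

Lemma bellman_row (R : realType) (S : finType) (G1 G2 : S -> S -> R) (mu1 mu2 : S -> R)
  (h : S * S -> R) (gamma : R) (W : S * S -> R) :
  rate_matrix G1 -> rate_matrix G2 ->
  (forall x, 0 < mu1 x) -> (forall x, 0 < mu2 x) ->
  bellman G1 G2 mu1 mu2 h gamma W <->
  (forall x, \sum_y Mg G1 G2 mu1 mu2 h gamma x y * expR (- W y) = 0).
Proof.
move=> rm1 rm2 h1 h2; rewrite bellman_iff //; split=> H x; have := H x.
  by rewrite row_bell => ->; rewrite mulr0.
have nz : mubar mu1 mu2 x * expR (- W x) != 0.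
  by rewrite gt_eqF // mulr_gt0 ?expR_gt0 ?(mb_gt0 h1 h2).
by rewrite row_bell => /eqP; rewrite mulf_eq0 (negbTE nz) /= => /eqP.
Qed.

Lemma objective_Qf (R : realType) (S : finType) (G1 G2 : S -> S -> R) (mu1 mu2 : S -> R)
  (h : S * S -> R) (nu : S * S -> R) :
  (forall x, 0 < mu1 x) -> (forall x, 0 < mu2 x) -> (forall x, 0 <= nu x) ->
  objective G1 G2 mu1 mu2 h nu =
  Qf (Mg G1 G2 mu1 mu2 h 0) (fun x => Num.sqrt (nu x / mubar mu1 mu2 x))
                            (fun x => Num.sqrt (nu x / mubar mu1 mu2 x)).
Proof.
move=> h1 h2 n0; rewrite Qf_Mg /objective /Jrate /=.
set s := fun x => Num.sqrt (nu x / mubar mu1 mu2 x).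
have ss : forall x, s x * s x = nu x / mubar mu1 mu2 x.
  move=> x; rewrite /s -expr2 sqr_sqrtr // divr_ge0 // ltW //; exact: mb_gt0.
rewrite addrAC -big_split /=; congr (_ - _).
  apply: eq_bigr => x _; rewrite ss -/(s x).
  have := mb_gt0 h1 h2 x => mp; field; rewrite gt_eqF //.
apply: eq_bigr => x _; rewrite [RHS](bigD1 x) //= rinf_xx mulr0 mul0r add0r.
by apply: eq_bigr => y _.
Qed.

Lemma norm_sq (R : realType) (S : finType) (mu1 mu2 : S -> R) (nu : S * S -> R) :
  (forall x, 0 < mu1 x) -> (forall x, 0 < mu2 x) -> (forall x, 0 <= nu x) ->
  \sum_x mubar mu1 mu2 x * (Num.sqrt (nu x / mubar mu1 mu2 x) * Num.sqrt (nu x / mubar mu1 mu2 x))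
  = \sum_x nu x.
Proof.
move=> h1 h2 n0; apply: eq_bigr => x _.
have := mb_gt0 h1 h2 x => mp.
have -> : Num.sqrt (nu x / mubar mu1 mu2 x) * Num.sqrt (nu x / mubar mu1 mu2 x) = nu x / mubar mu1 mu2 x.
  by rewrite -expr2 sqr_sqrtr // divr_ge0 // ltW.
by field; rewrite gt_eqF.
Qed.

Lemma exp2W (R : realType) (w : R) : expR (- 2 * w) = expR (- w) ^+ 2.
Proof. by rewrite mulNr -mulrN expRM_natl. Qed.

Lemma part1 (R : realType) (S : finType) (G1 G2 : S -> S -> R) (mu1 mu2 : S -> R)
  (h : S * S -> R) (gamma : R) (W : S * S -> R) :
  rate_matrix G1 -> rate_matrix G2 ->
  (forall x, 0 < mu1 x) -> (forall x, 0 < mu2 x) ->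
  reversible G1 mu1 -> reversible G2 mu2 ->
  bellman G1 G2 mu1 mu2 h gamma W ->
  \sum_x mubar mu1 mu2 x * expR (- 2 * W x) = 1 ->
  objective G1 G2 mu1 mu2 h (fun x => mubar mu1 mu2 x * expR (- 2 * W x)) = gamma /\
  (forall nu, prob_vec nu -> gamma <= objective G1 G2 mu1 mu2 h nu).
Proof.
move=> rm1 rm2 h1 h2 rv1 rv2 HB Hn.
have HR := (bellman_row h gamma W rm1 rm2 h1 h2).1 HB.
set phi := fun x => expR (- W x).
have phip : forall x, 0 < phi x by move=> x; exact: expR_gt0.
have mbp := mb_gt0 h1 h2.
have Ms := Mg_sym h gamma h1 h2 rv1 rv2.
have Mn := Mg_off_le0 h gamma rm1 rm2 h1 h2.
split.
  rewrite objective_Qf //; last by move=> x; rewrite mulr_ge0 ?ltW ?expR_gt0.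
  have -> : (fun x => Num.sqrt (mubar mu1 mu2 x * expR (- 2 * W x) / mubar mu1 mu2 x)) = phi.
    apply: funext => x; rewrite mulrAC divff ?gt_eqF // mul1r exp2W sqrtr_sqr.
    by rewrite ger0_norm // ltW.
  have := Qf_Mg_shift G1 G2 mu1 mu2 h gamma phi; rewrite (_ : Qf _ phi phi = 0).
    have -> : \sum_x mubar mu1 mu2 x * (phi x * phi x) = 1.
      by rewrite -Hn; apply: eq_bigr => x _; rewrite exp2W expr2.
    move=> e; rewrite mulr1 in e; lra.
  by rewrite Qf_row; apply: big1 => x _; rewrite HR mulr0.
move=> nu [n0 n1].
rewrite objective_Qf //.
set psi := fun x => Num.sqrt (nu x / mubar mu1 mu2 x).
have := Qf_Mg_shift G1 G2 mu1 mu2 h gamma psi.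
have -> : \sum_x mubar mu1 mu2 x * (psi x * psi x) = 1 by rewrite norm_sq.
have := Qf_ground_ge0 psi Ms phip Mn HR.
move=> g0 e; rewrite mulr1 in e; lra.
Qed.

Lemma part2 (R : realType) (S : finType) (G1 G2 : S -> S -> R) (mu1 mu2 : S -> R)
  (h : S * S -> R) (nu : S * S -> R) :
  rate_matrix G1 -> rate_matrix G2 -> irreducible G1 ->
  (forall x, 0 < mu1 x) -> (forall x, 0 < mu2 x) ->
  reversible G1 mu1 -> reversible G2 mu2 ->
  minimizer G1 G2 mu1 mu2 h nu ->
  (forall x, 0 < Num.sqrt (nu x / mubar mu1 mu2 x)) /\
  (forall x, \sum_y Mg G1 G2 mu1 mu2 h (objective G1 G2 mu1 mu2 h nu) x y
                      * Num.sqrt (nu y / mubar mu1 mu2 y) = 0).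
Proof.
move=> rm1 rm2 ir h1 h2 rv1 rv2 [[n0 n1] Hmin].
set g := objective G1 G2 mu1 mu2 h nu.
set psi := fun x => Num.sqrt (nu x / mubar mu1 mu2 x).
have mbp := mb_gt0 h1 h2.
have Ms := Mg_sym h g h1 h2 rv1 rv2.
have Mn := Mg_off_le0 h g rm1 rm2 h1 h2.
have N1 : \sum_x mubar mu1 mu2 x * (psi x * psi x) = 1 by rewrite norm_sq.
have Hg : g = Qf (Mg G1 G2 mu1 mu2 h 0) psi psi by rewrite /g objective_Qf.
have K0 : Qf (Mg G1 G2 mu1 mu2 h g) psi psi = 0.
  by rewrite Qf_Mg_shift N1 -Hg mulr1 subrr.
have Kge : forall a, 0 <= Qf (Mg G1 G2 mu1 mu2 h g) a a.
  move=> a; apply: le_trans (Qf_abs a Mn).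
  set b := fun x => `|a x|.
  have b0 : forall x, 0 <= b x by move=> x; exact: normr_ge0.
  set n := \sum_x mubar mu1 mu2 x * (b x * b x).
  have tge : forall x, 0 <= mubar mu1 mu2 x * (b x * b x).
    by move=> x; apply: mulr_ge0; [exact: ltW | exact: mulr_ge0].
  have nge : 0 <= n by apply: sumr_ge0 => x _.
  case: (eqVneq n 0) => [nz|nnz].
    have bz : forall x, b x = 0.
      move=> x; have := @psumr_eq0P _ _ _ _ (fun x _ => tge x) nz x isT.
      move/eqP; rewrite mulf_eq0 (gt_eqF (mbp x)) /= mulf_eq0 orbb => /eqP //.
    by rewrite Qf_row big1 // => x _; rewrite bz mul0r.
  have np : 0 < n by rewrite lt0r nnz.
  set k := (Num.sqrt n)^-1.
  have kp : 0 < k by rewrite invr_gt0 sqrtr_gt0.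
  have k2 : k ^+ 2 = n^-1 by rewrite /k exprVn sqr_sqrtr // ltW.
  set c := fun x => k * b x.
  set nu' := fun x => mubar mu1 mu2 x * (c x * c x).
  have nu'0 : forall x, 0 <= nu' x.
    move=> x; rewrite /nu' /c; apply: mulr_ge0; first exact: ltW.
    by apply: mulr_ge0; apply: mulr_ge0 => //; exact: ltW.
  have nu'1 : \sum_x nu' x = 1.
    rewrite /nu' /c.
    transitivity (k ^+ 2 * n); last by rewrite k2 mulVf.
    by rewrite /n mulr_sumr; apply: eq_bigr => x _; ring.
  have := Hmin nu' (conj nu'0 nu'1).
  rewrite -/g objective_Qf //.
  rewrite (@Qf_ext _ _ _ _ c); last first.
    move=> x; rewrite /nu' mulrC mulrA mulVf ?gt_eqF // mul1r -expr2.
    by rewrite sqrtr_sqr ger0_norm // /c mulr_ge0 // ltW.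
  rewrite Qf_scale -/g k2 Qf_Mg_shift -/n => hh.
  have : g * n <= Qf (Mg G1 G2 mu1 mu2 h 0) b b.
    have -> : Qf (Mg G1 G2 mu1 mu2 h 0) b b = n^-1 * Qf (Mg G1 G2 mu1 mu2 h 0) b b * n.
      by rewrite mulrAC mulVf ?mul1r // gt_eqF.
    by rewrite ler_pM2r //; move: hh; rewrite mul0r subr0.
  rewrite (Qf_Mg_shift G1 G2 mu1 mu2 h g b) -/n; lra.
set E := fun x => \sum_y Mg G1 G2 mu1 mu2 h g x y * psi y.
have L0 : Qf (Mg G1 G2 mu1 mu2 h g) psi E + Qf (Mg G1 G2 mu1 mu2 h g) E psi = 0.
  apply: (quad_zero (K := Qf (Mg G1 G2 mu1 mu2 h g) E E)) => t.
  have := Kge (fun x => psi x + t * E x); rewrite Qf_expand K0 add0r.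
  by rewrite mulrC.
have E0 : forall x, E x = 0.
  have : \sum_x E x * E x = 0.
    have : Qf (Mg G1 G2 mu1 mu2 h g) E psi = 0.
      by move: L0; rewrite (Qf_sym _ _ Ms) => e; lra.
    by rewrite Qf_row => e; exact: e.
  move=> hs x; have := @psumr_eq0P _ _ _ _ (fun x _ => (ltac:(rewrite -expr2; exact: sqr_ge0) : 0 <= E x * E x)) hs x isT.
  by move/eqP; rewrite mulf_eq0 orbb => /eqP.
split; last exact: E0.
have psi0 : forall x, 0 <= psi x by move=> x; exact: sqrtr_ge0.
have prop : forall x y, 0 < rinf G1 G2 mu1 mu2 x y -> psi x = 0 -> psi y = 0.
  move=> x y rp px.
  have := E0 x; rewrite /E Mg_row px mulr0 sub0r => /eqP.
  rewrite mulf_eq0 (gt_eqF (mbp x)) /= oppr_eq0 => /eqP hs.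
  have rge := rinf_ge0 rm1 rm2 h1 h2.
  have := @psumr_eq0P _ _ _ _ (fun z _ => mulr_ge0 (rge x z) (psi0 z)) hs y isT.
  by move/eqP; rewrite mulf_eq0 (gt_eqF rp) /= => /eqP.
have allz : forall x y, (psi x == 0) = (psi y == 0).
  apply: (closed_all rm1 rm2 ir h1 h2 (P := fun z => psi z == 0)).
  move=> x y rp; apply/idP/idP => /eqP pz; apply/eqP.
    exact: prop pz.
  by apply: (prop y x) => //; apply: rinf_pos_sym.
move=> x; rewrite lt0r psi0 andbT; apply/negP => /eqP px.
have : \sum_x mubar mu1 mu2 x * (psi x * psi x) = 0.
  apply: big1 => z _.
  have hz : psi z == 0 by rewrite (allz z x); apply/eqP; exact: px.
  by rewrite (eqP hz) mul0r mulr0.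
by rewrite N1 => /eqP; rewrite oner_eq0.
Qed.

Theorem lemma5p4 (R : realType) (S : finType)
  (G1 G2 : S -> S -> R) (mu1 mu2 : S -> R) (h : S * S -> R) :
  rate_matrix G1 -> rate_matrix G2 ->
  irreducible G1 -> irreducible G2 ->
  prob_vec mu1 -> prob_vec mu2 ->
  (forall x, 0 < mu1 x) -> (forall x, 0 < mu2 x) ->
  reversible G1 mu1 -> reversible G2 mu2 ->
  (forall (gamma : R) (W : S * S -> R),
      bellman G1 G2 mu1 mu2 h gamma W ->
      \sum_x mubar mu1 mu2 x * expR (- 2 * W x) = 1 ->
      minimizer G1 G2 mu1 mu2 h (fun x => mubar mu1 mu2 x * expR (- 2 * W x)))
  /\
  (forall nustar : S * S -> R,
      minimizer G1 G2 mu1 mu2 h nustar ->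
      let Wstar := fun x => - ln (Num.sqrt (nustar x / mubar mu1 mu2 x)) in
      let gstar := objective G1 G2 mu1 mu2 h nustar in
      bellman G1 G2 mu1 mu2 h gstar Wstar /\
      (forall (gamma : R) (W : S * S -> R),
          bellman G1 G2 mu1 mu2 h gamma W ->
          \sum_x mubar mu1 mu2 x * expR (- 2 * W x) = 1 ->
          gamma = gstar /\ W = Wstar)).
Proof.
move=> rm1 rm2 ir1 ir2 pm1 pm2 h1 h2 rv1 rv2.
have mbp := mb_gt0 h1 h2.
split.
  move=> gamma W HB Hn; have [e1 e2] := part1 rm1 rm2 h1 h2 rv1 rv2 HB Hn.
  split; first split => //.
    by move=> x; rewrite mulr_ge0 ?expR_gt0 // ltW.
  by move=> nu' pn; rewrite e1; exact: e2.
move=> nu Hm Wstar gstar.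
have [psip E0] := part2 rm1 rm2 ir1 h1 h2 rv1 rv2 Hm.
set psi := fun x => Num.sqrt (nu x / mubar mu1 mu2 x).
have eW : forall x, expR (- Wstar x) = psi x.
  by move=> x; rewrite /Wstar opprK lnK // posrE; exact: psip.
split.
  apply/(bellman_row h gstar Wstar rm1 rm2 h1 h2) => x.
  transitivity (\sum_y Mg G1 G2 mu1 mu2 h gstar x y * psi y); last exact: E0 x.
  by apply: eq_bigr => y _; rewrite eW.
move=> gamma W HB Hn.
have [e1 e2] := part1 rm1 rm2 h1 h2 rv1 rv2 HB Hn.
have ge : gamma = gstar.
  apply/eqP; rewrite eq_le; apply/andP; split; first exact: e2 (Hm.1).
  rewrite -e1; apply: Hm.2; split => //.
  by move=> x; rewrite mulr_ge0 ?expR_gt0 // ltW.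
split => //.
have HR := (bellman_row h gamma W rm1 rm2 h1 h2).1 HB.
set phi := fun x => expR (- W x).
have phip : forall x, 0 < phi x by move=> x; exact: expR_gt0.
have Ms := Mg_sym h gamma h1 h2 rv1 rv2.
have Mn := Mg_off_le0 h gamma rm1 rm2 h1 h2.
have N1 : \sum_x mubar mu1 mu2 x * (psi x * psi x) = 1.
  by rewrite norm_sq //; [exact: Hm.1.2 | exact: Hm.1.1].
have Nphi : \sum_x mubar mu1 mu2 x * (phi x * phi x) = 1.
  by rewrite -Hn; apply: eq_bigr => x _; rewrite exp2W expr2.
have K0 : Qf (Mg G1 G2 mu1 mu2 h gamma) psi psi = 0.
  rewrite Qf_Mg_shift N1 mulr1 ge -objective_Qf //; first by rewrite subrr.
  by case: Hm => [[]].
have teq := Qf_ground_eq0 Ms phip Mn HR K0.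
set t := fun x => psi x / phi x.
have tall : forall x y, t x = t y.
  move=> x y; apply/eqP.
  have Hc := closed_all rm1 rm2 ir1 h1 h2 (P := fun z => t z == t y).
  suff -> : (t x == t y) = (t y == t y) by rewrite eqxx.
  apply: Hc => u v rp; congr (_ == _); apply: teq.
  have uv : u != v by apply/negP => /eqP uv; move: rp; rewrite uv rinf_xx ltxx.
  rewrite Mg_off // oppr_lt0; exact: mulr_gt0.
have psiphi : forall x, psi x = phi x.
  move=> x; set c := t x.
  have pc : forall z, psi z = c * phi z.
    by move=> z; rewrite /c (tall x z) /t divfK // gt_eqF.
  have c2 : c * c = 1.
    rewrite -N1 -[LHS]mulr1 -Nphi mulr_sumr; apply: eq_bigr => z _; rewrite !pc; ring.
  have c0 : 0 <= c by rewrite /c /t divr_ge0 ?sqrtr_ge0 // ltW.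
  have : c = 1 by nra.
  by move=> c1; rewrite pc c1 mul1r.
apply: funext => x; rewrite /Wstar -/(psi x) psiphi /phi expRK opprK //.
Qed.
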